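(* Let $\alpha>0$, $\gamma>0$, $\beta_2\in\mathbb{R}\setminus\{0\}$ and $\kappa,\chi\in\mathbb{R}\setminus\{0\}$, and set $K=-\frac{2\gamma\kappa}{\chi\beta_2}$, assumed to satisfy $K>0$. Define $$T(z,t)=Ke^{-\alpha z}t,\qquad Z(z)=\frac{K\gamma}{2\alpha\chi}\left(e^{-2\alpha z}-1\right).$$ Let $Q(Z,T)$ be a solution of the standard NLSE $$iQ_Z+\kappa Q_{TT}+\chi|Q|^2Q=0 .$$ Then $$v(z,t)=\sqrt{K}\exp\Big[i\frac{\alpha}{2\beta_2}t^2-\frac{\alpha}{2}z\Big]\,Q(Z(z),T(z,t))$$ is a solution of $$iv_z+\frac{\beta_2}{2}v_{tt}-\gamma e^{-\alpha z}|v|^2v+\frac{\alpha^2}{2\beta_2}t^2v=0 .$$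
   Context: All functions are complex-valued functions of real variables; solutions are understood classically (sufficiently differentiable). *)

(* Defs.v *)
From Stdlib Require Import Reals.
From Coquelicot Require Import Coquelicot.
Open Scope R_scope.

Definition Cexp (w : C) : C :=
  Cmult (RtoC (exp (Re w))) (cos (Im w), sin (Im w)).

(* Q : R -> R -> C (arguments Z, T) is a classical solution of
   i Q_Z + kappa Q_TT + chi |Q|^2 Q = 0 : the first partial derivatives exist
   and are jointly continuous (so Q is C^1), Q_TT exists, and the equation
   holds at every point. *)
Definition nlse_solution (kappa chi : R) (Q : R -> R -> C) : Prop :=
  exists QZ QT QTT : R -> R -> C,
    (forall Z T, is_derive (fun s => Q s T) Z (QZ Z T)) /\
    (forall Z T, is_derive (fun s => Q Z s) T (QT Z T)) /\
    (forall Z T, is_derive (fun s => QT Z s) T (QTT Z T)) /\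
    (forall p : R * R, continuous (fun q : R * R => QZ (fst q) (snd q)) p) /\
    (forall p : R * R, continuous (fun q : R * R => QT (fst q) (snd q)) p) /\
    (forall Z T,
       Cplus (Cplus (Cmult Ci (QZ Z T)) (Cmult (RtoC kappa) (QTT Z T)))
             (Cmult (RtoC (chi * (Cmod (Q Z T))^2)) (Q Z T)) = RtoC 0).

Definition target_solution (alpha beta2 gamma : R) (v : R -> R -> C) : Prop :=
  exists vz vt vtt : R -> R -> C,
    (forall z t, is_derive (fun s => v s t) z (vz z t)) /\
    (forall z t, is_derive (fun s => v z s) t (vt z t)) /\
    (forall z t, is_derive (fun s => vt z s) t (vtt z t)) /\
    (forall z t,
       Cplus (Cplus (Cplus (Cmult Ci (vz z t)) (Cmult (RtoC (beta2 / 2)) (vtt z t)))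
                    (Cmult (RtoC (- gamma * exp (- alpha * z) * (Cmod (v z t))^2)) (v z t)))
             (Cmult (RtoC (alpha^2 / (2 * beta2) * t^2)) (v z t)) = RtoC 0).

(* Main.v *)
Require Import Defs.
From Stdlib Require Import Reals Lra.
From Coquelicot Require Import Coquelicot.
Open Scope R_scope.

Lemma dC_fst (f : R -> C) x l : is_derive f x l -> is_derive (fun s => fst (f s)) x (fst l).
Proof.
  intros H. unfold is_derive in *.
  apply (filterdiff_comp' f (fun t : C => fst t) x _ (fun t : C => fst t) H).
  apply filterdiff_linear. apply is_linear_fst.
Qed.

Lemma dC_snd (f : R -> C) x l : is_derive f x l -> is_derive (fun s => snd (f s)) x (snd l).
Proof.
  intros H. unfold is_derive in *.
  apply (filterdiff_comp' f (fun t : C => snd t) x _ (fun t : C => snd t) H).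
  apply filterdiff_linear. apply is_linear_snd.
Qed.

Lemma dC_pair (f : R -> C) x a b :
  is_derive (fun s => fst (f s)) x a -> is_derive (fun s => snd (f s)) x b ->
  is_derive f x (a, b).
Proof.
  intros Ha Hb. unfold is_derive in *.
  apply filterdiff_ext with (fun s => pair (fst (f s)) (snd (f s))).
  { intros y. destruct (f y); reflexivity. }
  apply (filterdiff_comp'_2 (fun s => fst (f s)) (fun s => snd (f s)) (fun u v => (u, v) : C) x
     _ _ (fun u v => (u, v) : C) Ha Hb).
  apply filterdiff_ext with (fun t => t).
  { intros [u v]; reflexivity. }
  apply filterdiff_ext_lin with (fun t => t).
  apply filterdiff_id.
  intros [u v]; reflexivity.
Qed.

Lemma dC_eq (f : R -> C) x l l' : is_derive f x l -> l = l' -> is_derive f x l'.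
Proof. intros H ->; exact H. Qed.

Lemma dR_eq (f : R -> R) x l l' : is_derive f x l -> l = l' -> is_derive f x l'.
Proof. intros H ->; exact H. Qed.

Lemma dR_mult (f g : R -> R) x a b : is_derive f x a -> is_derive g x b ->
  is_derive (fun s => f s * g s) x (a * g x + f x * b).
Proof. intros Ha Hb. apply (is_derive_mult f g x a b Ha Hb). intros; apply Rmult_comm. Qed.
Lemma dR_plus (f g : R -> R) x a b : is_derive f x a -> is_derive g x b ->
  is_derive (fun s => f s + g s) x (a + b).
Proof. intros Ha Hb. apply (is_derive_plus f g x a b Ha Hb). Qed.
Lemma dR_minus (f g : R -> R) x a b : is_derive f x a -> is_derive g x b ->
  is_derive (fun s => f s - g s) x (a - b).
Proof. intros Ha Hb. apply (is_derive_minus f g x a b Ha Hb). Qed.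

Lemma dC_mult (f g : R -> C) x df dg :
  is_derive f x df -> is_derive g x dg ->
  is_derive (fun s => Cmult (f s) (g s)) x (Cplus (Cmult df (g x)) (Cmult (f x) dg)).
Proof.
  intros Hf Hg.
  pose proof (dC_fst _ _ _ Hf) as f1. pose proof (dC_snd _ _ _ Hf) as f2.
  pose proof (dC_fst _ _ _ Hg) as g1. pose proof (dC_snd _ _ _ Hg) as g2.
  assert (E: Cplus (Cmult df (g x)) (Cmult (f x) dg) =
    ((fst df * fst (g x) + fst (f x) * fst dg) - (snd df * snd (g x) + snd (f x) * snd dg),
     (fst df * snd (g x) + fst (f x) * snd dg) + (snd df * fst (g x) + snd (f x) * fst dg))).
  { unfold Cplus, Cmult; simpl. f_equal; ring. }
  refine (dC_eq _ _ _ _ _ (eq_sym E)). apply dC_pair.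
  - apply (dR_minus (fun s => fst (f s) * fst (g s)) (fun s => snd (f s) * snd (g s))); apply dR_mult; assumption.
  - apply (dR_plus (fun s => fst (f s) * snd (g s)) (fun s => snd (f s) * fst (g s))); apply dR_mult; assumption.
Qed.


Lemma dC_const (c : C) x : is_derive (fun _ : R => c) x (RtoC 0).
Proof. apply dC_pair; simpl; apply (is_derive_const (K:=R_AbsRing) (V:=R_NormedModule)). Qed.

Lemma dC_scal (c : C) (g : R -> C) x dg :
  is_derive g x dg -> is_derive (fun s => Cmult c (g s)) x (Cmult c dg).
Proof.
  intros Hg. refine (dC_eq _ _ _ _ (dC_mult (fun _ => c) g x _ _ (dC_const c x) Hg) _).
  unfold Cplus, Cmult; simpl. apply injective_projections; simpl; ring.
Qed.

Lemma chainR (q qz qt : R -> R -> R) (a b : R -> R) x da db :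
 (forall u w, is_derive (fun s => q s w) u (qz u w)) ->
 (forall u w, is_derive (fun s => q u s) w (qt u w)) ->
 continuous (fun p : R*R => qt (fst p) (snd p)) (a x, b x) ->
 is_derive a x da -> is_derive b x db ->
 is_derive (fun s => q (a s) (b s)) x (qz (a x) (b x) * da + qt (a x) (b x) * db).
Proof.
  intros Hqz Hqt Hc Ha Hb.
  assert (D : filterdiff (fun p : R * R => (fun w u => q u w) (fst p) (snd p)) (locally (b x, a x))
     (fun p : R * R => plus (scal (fst p) (qt (a x) (b x))) (scal (snd p) (qz (a x) (b x))))).
  { apply (is_derive_filterdiff (fun w u => q u w) (b x) (a x) (fun w u => qt u w)).
    - apply filter_forall; intros p; apply Hqt.
    - apply Hqz.
    - apply (continuous_comp_2 (fun p : R * R => snd p) (fun p : R * R => fst p) (fun u w => qt u w)).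
      + apply continuous_snd.
      + apply continuous_fst.
      + exact Hc. }
  unfold is_derive in *.
  pose proof (filterdiff_comp'_2 b a (fun w u => q u w) x _ _
     (fun w u => plus (scal w (qt (a x) (b x))) (scal u (qz (a x) (b x)))) Hb Ha D) as H.
  simpl in H.
  apply (filterdiff_ext_lin _ _ _ H).
  intros y. unfold scal, plus; simpl. unfold mult, plus; simpl. ring.
Qed.

Lemma cont_fst_C (p : C) : continuous (fun c : C => fst c) p.
Proof. destruct p as [u v]. apply (continuous_fst (U:=R_UniformSpace) (V:=R_UniformSpace) u v). Qed.
Lemma cont_snd_C (p : C) : continuous (fun c : C => snd c) p.
Proof. destruct p as [u v]. apply (continuous_snd (U:=R_UniformSpace) (V:=R_UniformSpace) u v). Qed.

Lemma chainC (Q QZ QT : R -> R -> C) (a b : R -> R) x da db :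
 (forall u w, is_derive (fun s => Q s w) u (QZ u w)) ->
 (forall u w, is_derive (fun s => Q u s) w (QT u w)) ->
 continuous (fun p : R*R => QT (fst p) (snd p)) (a x, b x) ->
 is_derive a x da -> is_derive b x db ->
 is_derive (fun s => Q (a s) (b s)) x
   (Cplus (Cmult (QZ (a x) (b x)) (RtoC da)) (Cmult (QT (a x) (b x)) (RtoC db))).
Proof.
  intros Hqz Hqt Hc Ha Hb.
  assert (E : Cplus (Cmult (QZ (a x) (b x)) (RtoC da)) (Cmult (QT (a x) (b x)) (RtoC db)) =
     (fst (QZ (a x) (b x)) * da + fst (QT (a x) (b x)) * db,
      snd (QZ (a x) (b x)) * da + snd (QT (a x) (b x)) * db)).
  { unfold Cplus, Cmult, RtoC; simpl. apply injective_projections; simpl; ring. }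
  refine (dC_eq _ _ _ _ _ (eq_sym E)). apply dC_pair.
  - apply (chainR (fun u w => fst (Q u w)) (fun u w => fst (QZ u w)) (fun u w => fst (QT u w)) a b x da db).
    + intros u w. apply (dC_fst (fun s => Q s w)). apply Hqz.
    + intros u w. apply (dC_fst (fun s => Q u s)). apply Hqt.
    + apply (continuous_comp (fun p : R * R => QT (fst p) (snd p)) (fun c : C => fst c)). exact Hc. apply cont_fst_C.
    + exact Ha.
    + exact Hb.
  - apply (chainR (fun u w => snd (Q u w)) (fun u w => snd (QZ u w)) (fun u w => snd (QT u w)) a b x da db).
    + intros u w. apply (dC_snd (fun s => Q s w)). apply Hqz.
    + intros u w. apply (dC_snd (fun s => Q u s)). apply Hqt.
    + apply (continuous_comp (fun p : R * R => QT (fst p) (snd p)) (fun c : C => snd c)). exact Hc. apply cont_snd_C.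
    + exact Ha.
    + exact Hb.
Qed.

Lemma chain1C (f : R -> C) (a : R -> R) x df da :
  is_derive f (a x) df -> is_derive a x da ->
  is_derive (fun s => f (a s)) x (Cmult df (RtoC da)).
Proof.
  intros Hf Ha.
  refine (dC_eq _ _ _ _ (is_derive_comp f a x df da Hf Ha) _).
  unfold scal; simpl. unfold prod_scal, Cmult, RtoC; simpl. unfold scal; simpl; unfold mult; simpl.
  apply injective_projections; simpl; ring.
Qed.

Lemma dC_plus (f g : R -> C) x df dg :
  is_derive f x df -> is_derive g x dg ->
  is_derive (fun s => Cplus (f s) (g s)) x (Cplus df dg).
Proof.
  intros Hf Hg.
  pose proof (dC_fst _ _ _ Hf) as f1. pose proof (dC_snd _ _ _ Hf) as f2.
  pose proof (dC_fst _ _ _ Hg) as g1. pose proof (dC_snd _ _ _ Hg) as g2.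
  apply dC_pair.
  - apply (dR_plus (fun s => fst (f s)) (fun s => fst (g s))); assumption.
  - apply (dR_plus (fun s => snd (f s)) (fun s => snd (g s))); assumption.
Qed.

Lemma E_dz (a b z t : R) : is_derive (fun s => Cexp (a * s, b * t^2)) z
   (Cmult (Cexp (a * z, b * t^2)) (RtoC a)).
Proof.
  unfold Cexp, Cmult, RtoC; simpl. apply dC_pair; simpl.
  - auto_derive; auto. ring.
  - auto_derive; auto. ring.
Qed.

Lemma E_dt (a b z t : R) : is_derive (fun s => Cexp (a * z, b * s^2)) t
   (Cmult (Cexp (a * z, b * t^2)) (0, 2 * b * t)).
Proof.
  unfold Cexp, Cmult, RtoC; simpl. apply dC_pair; simpl.
  - auto_derive; auto. ring.
  - auto_derive; auto. ring.
Qed.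

Lemma P_dt (c t : R) : is_derive (fun s => (0, c * s) : C) t (0, c).
Proof. apply dC_pair; simpl. apply (is_derive_const (K:=R_AbsRing) (V:=R_NormedModule)).
  auto_derive; auto. ring. Qed.

Lemma Cmod2 (p : C) : Cmod p ^ 2 = fst p ^ 2 + snd p ^ 2.
Proof. unfold Cmod. rewrite pow2_sqrt; [reflexivity|]. apply Rplus_le_le_0_compat; apply pow2_ge_0. Qed.

Lemma Cmod_v (r K a b : R) (q : C) : r * r = K ->
  Cmod (Cmult (RtoC r) (Cmult (Cexp (a, b)) q)) ^2 = K * (exp a * exp a) * (fst q^2 + snd q^2).
Proof.
  intros Hr. rewrite Cmod2. destruct q as [q1 q2]. unfold Cexp, Cmult, RtoC, Re, Im; cbn [fst snd].
  transitivity (r * r * (exp a * exp a) * (sin b ^ 2 + cos b ^ 2) * (q1 ^ 2 + q2 ^ 2)); [ring|].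
  rewrite <- !Rsqr_pow2, sin2_cos2, Hr. ring.
Qed.

Lemma Cmult_pair (a b c d : R) : Cmult (a, b) (c, d) = (a * c - b * d, a * d + b * c).
Proof. reflexivity. Qed.
Lemma Cplus_pair (a b c d : R) : Cplus (a, b) (c, d) = (a + c, b + d).
Proof. reflexivity. Qed.

Theorem theorem3p3p1 (alpha gamma beta2 kappa chi : R) (Q : R -> R -> C)
  (Halpha : 0 < alpha) (Hgamma : 0 < gamma) (Hbeta2 : beta2 <> 0)
  (Hkappa : kappa <> 0) (Hchi : chi <> 0)
  (HK : 0 < - (2 * gamma * kappa) / (chi * beta2))
  (HQ : nlse_solution kappa chi Q) :
  let K := - (2 * gamma * kappa) / (chi * beta2) in
  let T := fun z t : R => K * exp (- alpha * z) * t in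
  let Z := fun z : R => K * gamma / (2 * alpha * chi) * (exp (-2 * alpha * z) - 1) in
  target_solution alpha beta2 gamma
    (fun z t : R =>
       Cmult (RtoC (sqrt K))
             (Cmult (Cexp (- alpha / 2 * z, alpha / (2 * beta2) * t^2))
                    (Q (Z z) (T z t)))).
Proof.
  intros K T Z.
  destruct HQ as (QZ & QT & QTT & HZ & HT & HTT & CZ & CT & Heq).
  set (E := fun z t => Cexp (- alpha / 2 * z, alpha / (2 * beta2) * t^2)).
  set (W := fun z t => Q (Z z) (T z t)).
  set (dZ := fun z => K * gamma / (2 * alpha * chi) * (-2 * alpha * exp (-2 * alpha * z))).
  set (dTz := fun z t => K * (- alpha * exp (- alpha * z)) * t).
  set (dTt := fun z => K * exp (- alpha * z)).
  set (P := fun t => (0, 2 * (alpha / (2 * beta2)) * t) : C).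
  set (dP := (0, 2 * (alpha / (2 * beta2))) : C).
  set (Wz := fun z t => Cplus (Cmult (QZ (Z z) (T z t)) (RtoC (dZ z))) (Cmult (QT (Z z) (T z t)) (RtoC (dTz z t)))).
  set (Wt := fun z t => Cmult (QT (Z z) (T z t)) (RtoC (dTt z))).
  set (Wtt := fun z t => Cmult (Cmult (QTT (Z z) (T z t)) (RtoC (dTt z))) (RtoC (dTt z))).
  set (Ez := fun z t => Cmult (E z t) (RtoC (- alpha / 2))).
  set (Et := fun z t => Cmult (E z t) (P t)).
  assert (HEz : forall z t, is_derive (fun s => E s t) z (Ez z t)) by (intros; apply E_dz).
  assert (HEt : forall z t, is_derive (fun s => E z s) t (Et z t)) by (intros; apply E_dt).
  assert (HP : forall t, is_derive P t dP) by (intros; apply P_dt).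
  assert (HdZ : forall z, is_derive Z z (dZ z)).
  { intros z. unfold Z, dZ. auto_derive; auto. ring. }
  assert (HdTz : forall z t, is_derive (fun s => T s t) z (dTz z t)).
  { intros z t. unfold T, dTz. auto_derive; auto. ring. }
  assert (HdTt : forall z t, is_derive (fun s => T z s) t (dTt z)).
  { intros z t. unfold T, dTt. auto_derive; auto. ring. }
  assert (HWz : forall z t, is_derive (fun s => W s t) z (Wz z t)).
  { intros z t. unfold W, Wz.
    apply (chainC Q QZ QT Z (fun s => T s t) z (dZ z) (dTz z t)); auto. }
  assert (HWt : forall z t, is_derive (fun s => W z s) t (Wt z t)).
  { intros z t. unfold W, Wt.
    apply (chain1C (Q (Z z)) (T z) t); auto. }
  assert (HWtt : forall z t, is_derive (fun s => Wt z s) t (Wtt z t)).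
  { intros z t. unfold Wt, Wtt.
    refine (dC_eq _ _ _ _ (dC_mult (fun s => QT (Z z) (T z s)) (fun _ => RtoC (dTt z)) t _ _
      (chain1C (QT (Z z)) (T z) t _ _ (HTT _ _) (HdTt z t)) (dC_const _ t)) _).
    unfold Cplus, Cmult, RtoC; simpl. apply injective_projections; simpl; ring. }
  exists (fun z t => Cmult (RtoC (sqrt K)) (Cplus (Cmult (Ez z t) (W z t)) (Cmult (E z t) (Wz z t)))).
  exists (fun z t => Cmult (RtoC (sqrt K)) (Cplus (Cmult (Et z t) (W z t)) (Cmult (E z t) (Wt z t)))).
  exists (fun z t => Cmult (RtoC (sqrt K)) (Cplus
     (Cplus (Cmult (Cplus (Cmult (Et z t) (P t)) (Cmult (E z t) dP)) (W z t)) (Cmult (Et z t) (Wt z t)))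
     (Cplus (Cmult (Et z t) (Wt z t)) (Cmult (E z t) (Wtt z t))))).
  split; [|split; [|split]].
  - intros z t. apply dC_scal. apply (dC_mult (fun s => E s t) (fun s => W s t)); auto.
  - intros z t. apply dC_scal. apply (dC_mult (fun s => E z s) (fun s => W z s)); auto.
  - intros z t. apply dC_scal. apply (dC_plus (fun s => Cmult (Et z s) (W z s)) (fun s => Cmult (E z s) (Wt z s))).
    + apply (dC_mult (fun s => Et z s) (fun s => W z s)); auto. apply (dC_mult (fun s => E z s) P); auto.
    + apply (dC_mult (fun s => E z s) (fun s => Wt z s)); auto.
  - intros z t.
    specialize (Heq (Z z) (T z t)).
    assert (Hr : sqrt K * sqrt K = K) by (apply sqrt_sqrt; unfold K; lra).
    cbv beta.
    unfold Ez, Et, E.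
    rewrite (Cmod_v (sqrt K) K _ _ _ Hr).
    rewrite Cmod2 in Heq.
    unfold W, Wz, Wt, Wtt, P, dP, dZ, dTz, dTt in *.
    assert (Hh1 : exp (- alpha * z) = exp (- alpha / 2 * z) * exp (- alpha / 2 * z)).
    { rewrite <- exp_plus. f_equal. field. }
    assert (Hh2 : exp (-2 * alpha * z) = (exp (- alpha / 2 * z) * exp (- alpha / 2 * z)) * (exp (- alpha / 2 * z) * exp (- alpha / 2 * z))).
    { rewrite <- !exp_plus. f_equal. field. }
    rewrite ?Hh1, ?Hh2.
    set (h := exp (- alpha / 2 * z)).
    set (cs := cos (alpha / (2 * beta2) * t ^ 2)).
    set (sn := sin (alpha / (2 * beta2) * t ^ 2)).
    set (r := sqrt K) in *.
    revert Heq.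
    generalize (Cexp ((- alpha / 2 * z)%R, (alpha / (2 * beta2) * t ^ 2)%R)); intros [e1 e2].
    destruct (Q (Z z) (T z t)) as [q1 q2].
    destruct (QZ (Z z) (T z t)) as [a1 a2].
    destruct (QT (Z z) (T z t)) as [b1 b2].
    destruct (QTT (Z z) (T z t)) as [c1 c2].
    intros Heq.
    unfold RtoC, Ci in Heq |- *.
    repeat (rewrite Cmult_pair in Heq || rewrite Cplus_pair in Heq).
    repeat (rewrite Cmult_pair || rewrite Cplus_pair).
    cbn [fst snd] in Heq |- *.
    injection Heq as N1 N2.
    assert (HKd : K = - (2 * gamma * kappa) / (chi * beta2)) by reflexivity.
    clearbody K.
    assert (Hkap : kappa = - (K * chi * beta2) / (2 * gamma)).
    { rewrite HKd. field. lra. }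
    clear HKd. subst kappa.
    match type of N1 with ?n1 = 0 => match type of N2 with ?n2 = 0 =>
      apply injective_projections; cbn [fst snd];
      [ transitivity (r * (- K * gamma / chi * (h*h*(h*h))) * (e1 * n1 - e2 * n2))
      | transitivity (r * (- K * gamma / chi * (h*h*(h*h))) * (e1 * n2 + e2 * n1)) ];
      [ field; repeat split; lra | rewrite N1, N2; ring | field; repeat split; lra | rewrite N1, N2; ring ]
    end end.
Qed.
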